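(* Let $\mathscr{Y}\in\mathbb{R}^{m\times1\times n_3}$ and $\mathscr{V}\in\mathbb{R}^{n\times ms\times n_3}$ be such that $\mathscr{V}^T\diamondsuit\mathscr{V}=\mathscr{I}_{mmn_3}$. Then $\|\mathscr{V}\star(\mathscr{Y}\circledast\mathscr{I}_{ssn_3})\|_F=\|\mathscr{Y}\|_{T_{\ell_2}}$.
   Context: All tensors are real third-order arrays; $\|\cdot\|_F$ is the Frobenius norm (square root of the sum of squares of all entries). $\widehat{\mathscr{A}}=\mathscr{A}\times_3F_{n_3}$ denotes the tensor obtained by applying the discrete Fourier transform ($F_{n_3}$ with entries $\omega^{(i-1)(j-1)}$, $\omega=e^{-2\pi\mathrm{i}/n_3}$) to each tube; its frontal slices $\hat A^{(k)}$ are the Fourier slices. T-product: $\mathscr{A}\star\mathscr{B}$ has Fourier slices $\hat A^{(k)}\hat B^{(k)}$. Transpose $\mathscr{A}^T$: transpose each frontal slice and reverse the order of frontal slices $2,\dots,n_3$. $\mathscr{I}_{nnn_3}$: first frontal slice $I_n$, others zero. T-Kronecker product $\mathscr{A}\circledast\mathscr{B}$: Fourier slices $\hat A^{(k)}\otimes\hat B^{(k)}$. T-trace: the tube in $\mathbb{R}^{1\times1\times n_3}$ whose $k$-th Fourier slice is the trace of the $k$-th Fourier slice. Tubal inner product $\langle\mathscr{X},\mathscr{Y}\rangle_T=\text{T-trace}(\mathscr{X}^T\star\mathscr{Y})$. T-diamond product: for $\mathscr{V}=[\mathscr{V}_1,\dots,\mathscr{V}_m]$ with blocks $\mathscr{V}_i\in\mathbb{R}^{n\times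 s\times n_3}$, $\mathscr{V}^T\diamondsuit\mathscr{V}\in\mathbb{R}^{m\times m\times n_3}$ has $(i,j)$ tube $\langle\mathscr{V}_i,\mathscr{V}_j\rangle_T$. T-$\ell_2$ norm of $\mathscr{Y}\in\mathbb{R}^{m\times1\times n_3}$: $\|\mathscr{Y}\|_{T_{\ell_2}}=\frac{1}{\sqrt{n_3}}\big(\sum_{k=1}^{n_3}\|\hat Y^{(k)}\|_2^2\big)^{1/2}$, where $\hat Y^{(k)}\in\mathbb{C}^m$ are the Fourier slices. *)

(* Defs.v *)
From HB Require Import structures.
From mathcomp Require Import all_boot all_order all_algebra.
From mathcomp Require Import complex mxtens.
From mathcomp Require Import reals trigo.
Set Implicit Arguments. Unset Strict Implicit. Unset Printing Implicit Defensive.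
Import Order.TTheory GRing.Theory Num.Theory.
Local Open Scope ring_scope.

Section Tensors.
Variable R : realType.

(* A real third-order tensor in R^{n1 x n2 x n3}, given by its frontal
   slices (0-indexed: slice k : 'I_n3 is the (k+1)-th frontal slice). *)
Definition tensor (n1 n2 n3 : nat) := 'I_n3 -> 'M[R]_(n1, n2).

Definition omega (n3 : nat) : R[i] :=
  Complex (cos (2 * pi / n3%:R)) (- sin (2 * pi / n3%:R)).

Definition fslice {n1 n2 n3} (A : tensor n1 n2 n3) (k : 'I_n3)
  : 'M[R[i]]_(n1, n2) :=
  \sum_(j < n3) (omega n3 ^+ (k * j)) *: map_mx (fun x : R => (x%:C)%C) (A j).

(* The (real) tensor whose Fourier slices are F : inverse DFT along tubes.
   (Real part taken to land in real tensors; all uses below have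
   conjugate-symmetric Fourier slices so the inverse DFT is already real.) *)
Definition of_fslices {n1 n2 n3} (F : 'I_n3 -> 'M[R[i]]_(n1, n2))
  : tensor n1 n2 n3 :=
  fun j => map_mx (fun z : R[i] => complex.Re z)
    ((n3%:R)^-1 *: \sum_(k < n3) ((omega n3 ^+ (k * j))^-1 *: F k)).

Definition tprod {n1 n2 n4 n3} (A : tensor n1 n2 n3) (B : tensor n2 n4 n3)
  : tensor n1 n4 n3 :=
  of_fslices (fun k => fslice A k *m fslice B k).

Lemma negord_proof n (k : 'I_n) : ((n - k) %% n < n)%N.
Proof. by rewrite ltn_pmod // (leq_ltn_trans (leq0n k) (ltn_ord k)). Qed.
Definition negord {n} (k : 'I_n) : 'I_n := Ordinal (negord_proof k).

(* Transpose: transpose each frontal slice, reverse the order of slices 2..n3 *)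
Definition ttrans {n1 n2 n3} (A : tensor n1 n2 n3) : tensor n2 n1 n3 :=
  fun k => (A (negord k))^T.

Definition tid (n n3 : nat) : tensor n n n3 :=
  fun k => if val k == 0%N then 1%:M else 0.

Definition tkron {m1 n1 m2 n2 n3} (A : tensor m1 n1 n3) (B : tensor m2 n2 n3)
  : tensor (m1 * m2) (n1 * n2) n3 :=
  of_fslices (fun k => fslice A k *t fslice B k).

Definition ttrace {n n3} (X : tensor n n n3) : tensor 1 1 n3 :=
  of_fslices (fun k => (\tr (fslice X k))%:M).

Definition tinner {n1 n2 n3} (X Y : tensor n1 n2 n3) : tensor 1 1 n3 :=
  ttrace (tprod (ttrans X) Y).

(* i-th lateral block V_i in R^{n x s x n3} of V = [V_1, ..., V_m] *)
Definition tblock {n m s n3} (V : tensor n (m * s) n3) (i : 'I_m)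
  : tensor n s n3 :=
  fun k => \matrix_(a, b) V k a (mxtens_index (i, b)).

Definition tdiamond {n m s n3} (V : tensor n (m * s) n3) : tensor m m n3 :=
  fun k => \matrix_(i, j) tinner (tblock V i) (tblock V j) k 0 0.

Definition frob {n1 n2 n3} (A : tensor n1 n2 n3) : R :=
  Num.sqrt (\sum_(k < n3) \sum_(a < n1) \sum_(b < n2) A k a b ^+ 2).

Definition tl2 {m n3} (Y : tensor m 1 n3) : R :=
  (Num.sqrt n3%:R)^-1 *
  Num.sqrt (\sum_(k < n3) \sum_(a < m) Normc.normc (fslice Y k a 0) ^+ 2).

End Tensors.

(* Main.v *)
Require Import Defs.
From HB Require Import structures.
From mathcomp Require Import all_boot all_order all_algebra.
From mathcomp Require Import complex mxtens.
From mathcomp Require Import reals trigo.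
From mathcomp Require Import ring lra zify.
Import Order.TTheory GRing.Theory Num.Theory.
Local Open Scope ring_scope.
Local Open Scope complex_scope.
Lemma eq_inv (F : fieldType) (x y : F) : x * y = 1 -> x = y^-1.
Proof.
move=> h; have yz : y != 0.
  by apply/eqP=> e; move: h; rewrite e mulr0 => /eqP; rewrite eq_sym oner_eq0.
by rewrite -[x]mulr1 -(mulfV yz) mulrA h mul1r.
Qed.

Lemma real_conj (R : rcfType) (z : R[i]) : z^* = z -> (complex.Re z)%:C = z.
Proof. by move=> h; rewrite ReJ_add h -mulr2n -[z *+ 2]mulr_natr mulfK // pnatr_eq0. Qed.

Lemma normc2 (R : rcfType) (z : R[i]) : ((Normc.normc z) ^+ 2)%:C = z * z^*.
Proof.
case: z => a b; rewrite /Normc.normc sqr_sqrtr ?addr_ge0 ?sqr_ge0 //.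
by apply/eqP; rewrite eq_complex /=; apply/andP; split; apply/eqP; ring.
Qed.

Lemma sum_tens (V : nmodType) m s (F : 'I_(m * s) -> V) :
  \sum_(c < m * s) F c = \sum_(i < m) \sum_(b < s) F (mxtens_index (i, b)).
Proof.
rewrite pair_big /= (reindex (@mxtens_index m s)) /=; last first.
  by exists (@mxtens_unindex m s) => x _; rewrite (mxtens_indexK, mxtens_unindexK).
by apply: eq_bigr => -[i b].
Qed.

Lemma key (R : rcfType) n m s (P : 'M[R[i]]_(n, m * s)) (y : 'M[R[i]]_(m, 1))
  (hON : forall i j, \sum_(b < s) \sum_(a < n) (P a (mxtens_index (i, b)))^* *
           P a (mxtens_index (j, b)) = (i == j)%:R) :
  \sum_(a < n) \sum_(b < 1 * s) (P *m (y *t 1%:M)) a b * ((P *m (y *t 1%:M)) a b)^*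
  = \sum_(i < m) y i 0 * (y i 0)^*.
Proof.
have E a b : (P *m (y *t 1%:M)) a (mxtens_index (ord0, b)) =
    \sum_(i < m) y i 0 * P a (mxtens_index (i, b)).
  rewrite mxE sum_tens; apply: eq_bigr => i _.
  rewrite (bigD1 b) //= big1 ?addr0 => [|b' hb]; last first.
    by rewrite tensmxE mxE (negbTE hb) mulr0 mulr0.
  by rewrite tensmxE mxE eqxx mulr1 mulrC.
under eq_bigr => a _ do rewrite sum_tens big_ord1.
under eq_bigr => a _ do under eq_bigr => b _ do
  rewrite E rmorph_sum mulr_suml; rewrite /=.
under eq_bigr => a _ do under eq_bigr => b _ do
  under eq_bigr => i _ do rewrite mulr_sumr; rewrite /=.
under eq_bigr => a _ do rewrite exchange_big /=.
rewrite exchange_big /=.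
under eq_bigr => i _ do under eq_bigr => a _ do rewrite exchange_big /=.
under eq_bigr => i _ do rewrite exchange_big /=.
have F (i j : 'I_m) : \sum_(a < n) \sum_(b < s)
    y i 0 * P a (mxtens_index (i, b)) * (y j 0 * P a (mxtens_index (j, b)))^*
    = y i 0 * (y j 0)^* * (j == i)%:R.
  rewrite -hON mulr_sumr exchange_big /=; apply: eq_bigr => b _.
  rewrite mulr_sumr; apply: eq_bigr => a _; rewrite rmorphM; ring.
under eq_bigr => i _ do under eq_bigr => j _ do rewrite F.
apply: eq_bigr => i _.
rewrite (bigD1 i) //= eqxx mulr1 big1 ?addr0 // => j /negbTE.
by rewrite eq_sym => ->; rewrite mulr0.
Qed.

Section S.
Variable R : realType.
Variable n : nat.
Local Notation w := (omega R n).
Local Notation th := (2 * pi / n%:R : R).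
Lemma omegaX d : w ^+ d = Complex (cos (d%:R * th)) (- sin (d%:R * th)).
Proof.
rewrite /omega; move: th => t.
elim: d => [|d IH]; first by rewrite expr0 mul0r cos0 sin0 oppr0.
rewrite exprSr IH.
rewrite -[(_ +i* _) * (_ +i* _)]/(_ +i* _).
have -> : (d.+1)%:R = d%:R + 1 :> R by rewrite -natr1.
by rewrite mulrDl mul1r cosD sinD; congr Complex; ring.
Qed.
Lemma omega_n : (0 < n)%N -> w ^+ n = 1.
Proof.
move=> n0; have nz : n%:R != 0 :> R by rewrite pnatr_eq0 -lt0n.
rewrite omegaX mulrC divfK // mulr_natl cos2pi sin2pi oppr0 //.
Qed.

Lemma omega_neq1 d : (0 < d)%N -> (d < n)%N -> w ^+ d != 1.
Proof.
move=> d0 dn; apply/eqP; rewrite omegaX => /(congr1 (@complex.Re R)) /= hc.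
have n0 : (0 < n)%N by apply: leq_ltn_trans dn.
have nz : 0 < n%:R :> R by rewrite ltr0n.
pose y : R := d%:R * pi / n%:R.
have hy : d%:R * th = y *+ 2.
  by rewrite /y -mulr_natl; field; rewrite gt_eqF.
have y0 : 0 < y < pi.
  apply/andP; split; first by rewrite /y divr_gt0 // mulr_gt0 ?ltr0n ?pi_gt0.
  rewrite /y ltr_pdivrMr // mulrC ltr_pM2l ?pi_gt0 // ltr_nat //.
have := sin_gt0_pi y0.
move: hc; rewrite hy cos_mulr2n => hc.
have c2 : cos y ^+ 2 = 1.
  move: hc; rewrite mulr2n; move: (cos y ^+ 2) => c; lra.
have : sin y ^+ 2 = 0 by rewrite sin2cos2 c2 subrr.
by move/eqP; rewrite expf_eq0 /= => /eqP ->; rewrite ltxx.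
Qed.

Lemma omega_conj : w * w^* = 1.
Proof.
rewrite /omega /=.
rewrite -[(_ +i* _) * (_ +i* _)]/(_ +i* _).
apply/eqP; rewrite eq_complex /= opprK; apply/andP; split; apply/eqP.
  by rewrite mulNr opprK -expr2 cos2Dsin2.
by rewrite mulNr mulrC subrr.
Qed.
Lemma normX k : w ^+ k * (w ^+ k)^* = 1.
Proof. by rewrite rmorphXn -exprMn omega_conj expr1n. Qed.

Lemma omega_dvd x : (0 < n)%N -> (n %| x)%N -> w ^+ x = 1.
Proof. by move=> n0 /dvdnP [q ->]; rewrite mulnC exprM omega_n // expr1n. Qed.

Lemma orth (a b : 'I_n) :
  \sum_(j < n) w ^+ (a * j) * (w ^+ (b * j))^* = if a == b then n%:R else 0.
Proof.
have n0 : (0 < n)%N by apply: leq_ltn_trans (ltn_ord a).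
pose z := w ^+ (a + n - b).
have e j : w ^+ (a * j) * (w ^+ (b * j))^* = z ^+ j.
  have -> : w ^+ (a * j) = z ^+ j * w ^+ (b * j).
    rewrite -exprM -exprD -mulnDl subnK; last by rewrite (leq_trans (ltnW (ltn_ord b))) // leq_addl.
    by rewrite mulnDl exprD (@omega_dvd _ n0 (dvdn_mulr _ (dvdnn n))) mulr1.
  by rewrite -mulrA normX mulr1.
rewrite (eq_bigr (fun j : 'I_n => z ^+ j)) => [|j _]; last exact: e.
rewrite /z; clear e z.
have [<-|ab] := eqVneq a b; rewrite ?eqxx.
  rewrite addKn omega_n // (eq_bigr (fun _ => 1)) => [|j _]; last by rewrite expr1n.
  by rewrite sumr_const card_ord.
set z := w ^+ _.
have z1 : z != 1.
  rewrite /z -(expr_mod _ (omega_n n0)) omega_neq1 ?ltn_pmod //.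
  have ab' : (a : nat) <> b by move=> h; move/eqP: ab; apply; apply: val_inj.
  have := ltn_ord a; have := ltn_ord b; move: (nat_of_ord a) (nat_of_ord b) ab' => x y ? ? ?.
  case: (leqP y x) => h.
    have -> : (x + n - y = (x - y) + n)%N by lia.
    rewrite modnDr modn_small; lia.
  rewrite modn_small; lia.
have zn : z ^+ n = 1 by rewrite /z exprAC omega_n // expr1n.
have := subrX1 z n; rewrite zn subrr => /esym /eqP; rewrite mulf_eq0 subr_eq0 (negbTE z1) /=.
by move/eqP.
Qed.
Lemma invX m : (w ^+ m)^-1 = (w ^+ m)^*.
Proof. by apply/esym/eq_inv; rewrite mulrC normX. Qed.

Lemma negordK : involutive (@negord n).
Proof.
move=> k; apply: val_inj => /=; case: k => k hk /=.
case: k hk => [|k] hk /=; first by rewrite subn0 modnn subn0 modnn.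
rewrite (@modn_small (n - k.+1)); last by lia.
by rewrite subKn ?modn_small // ltnW.
Qed.

Lemma negord_inj : injective (@negord n).
Proof. exact: inv_inj negordK. Qed.

Lemma negX (k : 'I_n) j : w ^+ (negord k * j) = (w ^+ (k * j))^*.
Proof.
have n0 : (0 < n)%N by apply: leq_ltn_trans (ltn_ord k).
rewrite -invX; apply: eq_inv; rewrite -exprD -mulnDl omega_dvd // dvdn_mulr //.
by rewrite /dvdn /= modnDml subnK ?modnn // ltnW.
Qed.

Definition dft (x : 'I_n -> R[i]) (k : 'I_n) := \sum_(j < n) w ^+ (k * j) * x j.

Lemma dft_conj (x : 'I_n -> R[i]) k :
  (dft x k)^* = \sum_(j < n) w ^+ (negord k * j) * (x j)^*.
Proof. by rewrite rmorph_sum; apply: eq_bigr => j _; rewrite rmorphM negX. Qed.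

Lemma parseval (x y : 'I_n -> R[i]) :
  \sum_(k < n) dft x k * (dft y k)^* = n%:R * \sum_(j < n) x j * (y j)^*.
Proof.
rewrite /dft.
under eq_bigr => k _ do rewrite rmorph_sum mulr_suml; rewrite exchange_big /=.
under eq_bigr => j _ do under eq_bigr => k _ do rewrite mulr_sumr; rewrite /=.
under eq_bigr => j _ do rewrite exchange_big /=.
have e (j j' : 'I_n) : \sum_(k < n) w ^+ (k * j) * x j * (w ^+ (k * j') * y j')^* =
   x j * (y j')^* * (if j == j' then n%:R else 0).
  rewrite -(orth j j') mulr_sumr; apply: eq_bigr => k _.
  by rewrite rmorphM (mulnC k j) (mulnC k j'); ring.
under eq_bigr => j _ do under eq_bigr => j' _ do rewrite e.
rewrite mulr_sumr; apply: eq_bigr => j _.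
rewrite (bigD1 j) //= eqxx big1 ?addr0 => [|j' /negbTE]; first by rewrite mulrC.
by rewrite eq_sym => ->; rewrite mulr0.
Qed.
Lemma inv_dft (f : 'I_n -> R[i]) (hf : forall k, f (negord k) = (f k)^*) k0 :
  dft (fun j => (complex.Re (n%:R^-1 * \sum_(k < n) (w ^+ (k * j))^-1 * f k))%:C) k0
  = f k0.
Proof.
have n0 : (0 < n)%N by apply: leq_ltn_trans (ltn_ord k0).
have nz : n%:R != 0 :> R[i] by rewrite pnatr_eq0 -lt0n.
have real (j : 'I_n) : (n%:R^-1 * \sum_(k < n) (w ^+ (k * j))^-1 * f k)^*
    = n%:R^-1 * \sum_(k < n) (w ^+ (k * j))^-1 * f k.
  rewrite rmorphM fmorphV rmorph_nat rmorph_sum; congr (_ * _).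
  rewrite (reindex_inj negord_inj) /=; apply: eq_bigr => k _.
  by rewrite rmorphM hf !invX negX /= !conjcK.
rewrite /dft; under eq_bigr => j _ do rewrite real_conj ?real //.
under eq_bigr => j _ do rewrite mulrCA mulr_sumr.
rewrite -mulr_sumr exchange_big /=.
have e (k : 'I_n) : \sum_(j < n) w ^+ (k0 * j) * ((w ^+ (k * j))^-1 * f k)
    = (if k0 == k then n%:R else 0) * f k.
  by rewrite -(orth k0 k) mulr_suml; apply: eq_bigr => j _; rewrite invX mulrA.
under eq_bigr => k _ do rewrite e.
rewrite (bigD1 k0) //= eqxx big1 ?addr0 ?mulKf // => k /negbTE.
by rewrite eq_sym => ->; rewrite mul0r.
Qed.
Lemma fsliceE n1 n2 (A : tensor R n1 n2 n) k a b :
  fslice A k a b = dft (fun j => (A j a b)%:C) k.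
Proof. by rewrite /fslice summxE; apply: eq_bigr => j _; rewrite !mxE. Qed.

Lemma ofE n1 n2 (F : 'I_n -> 'M[R[i]]_(n1, n2)) j a b :
  of_fslices F j a b = complex.Re (n%:R^-1 * \sum_(k < n) (w ^+ (k * j))^-1 * F k a b).
Proof.
rewrite /of_fslices !mxE summxE; congr (complex.Re (_ * _)).
by apply: eq_bigr => k _; rewrite !mxE.
Qed.

Definition csym n1 n2 (F : 'I_n -> 'M[R[i]]_(n1, n2)) :=
  forall k a b, F (negord k) a b = (F k a b)^*.
Arguments csym {n1 n2}.

Lemma fslice_of n1 n2 (F : 'I_n -> 'M[R[i]]_(n1, n2)) :
  csym F -> forall k, fslice (of_fslices F) k = F k.
Proof.
move=> hF k; apply/matrixP => a b; rewrite fsliceE.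
rewrite -(inv_dft _ (fun k => hF k a b) k) /dft; apply: eq_bigr => j _.
by rewrite ofE.
Qed.

Lemma csym_fslice n1 n2 (A : tensor R n1 n2 n) : csym (fslice A).
Proof.
move=> k a b; rewrite !fsliceE dft_conj; apply: eq_bigr => j _.
by congr (_ * _); apply/eqP; rewrite eq_complex /= oppr0 !eqxx.
Qed.

Lemma csym_mul n1 n2 n4 (F : 'I_n -> 'M[R[i]]_(n1, n2)) (G : 'I_n -> 'M[R[i]]_(n2, n4)) :
  csym F -> csym G -> csym (fun k => F k *m G k).
Proof.
move=> hF hG k a b; rewrite !mxE rmorph_sum; apply: eq_bigr => c _.
by rewrite rmorphM hF hG.
Qed.

Lemma csym_tens m1 n1 m2 n2 (F : 'I_n -> 'M[R[i]]_(m1, n1)) (G : 'I_n -> 'M[R[i]]_(m2, n2)) :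
  csym F -> csym G -> csym (fun k => F k *t G k).
Proof. by move=> hF hG k a b; rewrite !mxE rmorphM hF hG. Qed.

Lemma csym_tr n1 (F : 'I_n -> 'M[R[i]]_n1) :
  csym F -> csym (fun k => (\tr (F k))%:M : 'M_1).
Proof.
move=> hF k a b; rewrite !mxE rmorphMn rmorph_sum; congr (_ *+ _).
by apply: eq_bigr => c _; rewrite hF.
Qed.

Lemma fslice_tprod n1 n2 n4 (A : tensor R n1 n2 n) (B : tensor R n2 n4 n) k :
  fslice (tprod A B) k = fslice A k *m fslice B k.
Proof. by apply: fslice_of; apply: csym_mul; apply: csym_fslice. Qed.

Lemma fslice_tkron m1 n1 m2 n2 (A : tensor R m1 n1 n) (B : tensor R m2 n2 n) k :
  fslice (tkron A B) k = fslice A k *t fslice B k.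
Proof. by apply: fslice_of; apply: csym_tens; apply: csym_fslice. Qed.

Lemma fslice_ttrace n1 (X : tensor R n1 n1 n) k :
  fslice (ttrace X) k = (\tr (fslice X k))%:M.
Proof. by apply: fslice_of; apply: csym_tr; apply: csym_fslice. Qed.

Lemma fslice_ttrans n1 n2 (A : tensor R n1 n2 n) k :
  fslice (ttrans A) k = (map_mx conjc (fslice A k))^T.
Proof.
apply/matrixP => a b; rewrite !mxE !fsliceE dft_conj /dft.
rewrite (reindex_inj negord_inj); apply: eq_bigr => j _.
rewrite /ttrans negordK !mxE; congr (_ * _).
  by rewrite mulnC !negX mulnC.
by apply/eqP; rewrite eq_complex /= oppr0 !eqxx.
Qed.

Lemma fslice_tid s (n0 : (0 < n)%N) k : fslice (@tid R s n) k = 1%:M.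
Proof.
apply/matrixP => a b; rewrite fsliceE /dft (bigD1 (Ordinal n0)) //= big1 ?addr0.
  by rewrite /tid /= muln0 expr0 mul1r !mxE; case: (a == b).
move=> j hj; rewrite /tid ifF ?mxE ?mulr0 //.
by apply/negbTE; apply: contra hj => /eqP h; apply/eqP/val_inj.
Qed.

Lemma fslice_tblock n1 m s (V : tensor R n1 (m * s) n) i k a b :
  fslice (tblock V i) k a b = fslice V k a (mxtens_index (i, b)).
Proof. by rewrite !fsliceE /dft; apply: eq_bigr => j _; rewrite /tblock mxE. Qed.
End S.

Theorem proposition9 (R : realType) (m n s n3 : nat)
  (Y : tensor R m 1 n3) (V : tensor R n (m * s) n3) :
  tdiamond V = @tid R m n3 ->
  frob (tprod V (tkron Y (@tid R s n3))) = tl2 Y.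
Proof.
move=> H.
have [e|n0] := posnP n3.
  by subst n3; rewrite /frob /tl2 !big_ord0 sqrtr0 mulr0.
have ON k (i j : 'I_m) : \sum_(b < s) \sum_(a < n)
    (fslice V k a (mxtens_index (i, b)))^* * fslice V k a (mxtens_index (j, b))
    = (i == j)%:R.
  have := congr1 (fun T => fslice T k i j) H.
  rewrite fslice_tid // mxE => <-.
  rewrite (_ : fslice _ k i j = fslice (tinner (tblock V i) (tblock V j)) k 0 0);
    last by rewrite !fsliceE /dft; apply: eq_bigr => l _; rewrite /tdiamond mxE.
  rewrite fslice_ttrace mxE eqxx mulr1n fslice_tprod fslice_ttrans.
  rewrite /mxtrace; apply: eq_bigr => b _; rewrite mxE; apply: eq_bigr => a _.
  by rewrite !mxE !fslice_tblock.
pose X := tprod V (tkron Y (@tid R s n3)).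
rewrite -/X.
pose SX := \sum_(j < n3) \sum_(a < n) \sum_(b < 1 * s) X j a b ^+ 2.
pose SY := \sum_(k < n3) \sum_(a < m) Normc.normc (fslice Y k a 0) ^+ 2.
have claim : (n3%:R * SX)%:C = SY%:C :> R[i].
  rewrite rmorphM rmorph_nat /SX /SY !rmorph_sum /=.
  transitivity (\sum_(k < n3) \sum_(a < n) \sum_(b < 1 * s)
                  fslice X k a b * (fslice X k a b)^*).
    under eq_bigr => j _ do rewrite rmorph_sum.
    under eq_bigr => j _ do under eq_bigr => a _ do rewrite rmorph_sum.
    rewrite exchange_big /=; under eq_bigr => a _ do rewrite exchange_big /=.
    rewrite [RHS]exchange_big /=; under [RHS]eq_bigr => a _ do rewrite exchange_big /=.
    rewrite mulr_sumr; apply: eq_bigr => a _.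
    rewrite mulr_sumr; apply: eq_bigr => b _.
    under [RHS]eq_bigr => k _ do rewrite fsliceE.
    rewrite parseval; congr (_ * _); apply: eq_bigr => j _.
    by rewrite rmorphXn expr2; congr (_ * _); apply/eqP; rewrite eq_complex /= oppr0 !eqxx.
  apply: eq_bigr => k _.
  rewrite rmorph_sum /X fslice_tprod fslice_tkron fslice_tid // key //.
  by apply: eq_bigr => a _; exact/esym/normc2.
have {}claim : n3%:R * SX = SY by apply: complexI.
rewrite /frob /tl2 -/SX -/SY -claim.
have sx : 0 <= SX.
  apply/sumr_ge0 => j _; apply/sumr_ge0 => a _; apply/sumr_ge0 => b _; exact: sqr_ge0.
have nn : 0 < Num.sqrt (n3%:R : R) by rewrite sqrtr_gt0 ltr0n.
by rewrite sqrtrM ?ler0n // mulKf // gt_eqF.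
Qed.
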